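(* Let $G$ be a group, $R$ a unital ring and $E$ any directed graph. Then every standard $G$-grading of the Leavitt path algebra $L_R(E)$ is virtually epsilon-strong.
   Context: A directed graph $E=(E^0,E^1,s,r)$ has vertex set $E^0$, edge set $E^1$, source and range maps $s,r\colon E^1\to E^0$. The Leavitt path algebra $L_R(E)$ is the $R$-algebra generated by symbols $v$ ($v\in E^0$), $f,f^*$ ($f\in E^1$), with $R$ commuting with the generators, subject to: $uv=\delta_{u,v}u$; $s(f)f=fr(f)=f$ and $r(f)f^*=f^*s(f)=f^*$; $f^*f'=\delta_{f,f'}r(f)$; and $\sum_{f\in E^1,s(f)=v}ff^*=v$ for every $v$ with $s^{-1}(v)$ nonempty and finite. A standard $G$-grading: assign $\deg(v)=e$ for all $v\in E^0$, choose for each $f\in E^1$ some $\deg(f)\in G$ and set $\deg(f^* )=\deg(f)^{-1}$; this grades the free $R$-algebra on these symbols, the ideal of relations is homogeneous, and $L_R(E)$ receives the quotient grading. Rings are associative, not necessarily unital. A $G$-grading $S=\bigoplus_gS_g$ is virtually epsilon-strong if $S_gS_{g^{-1}}S_g=S_g$ for all $g$ and each ring $S_gS_{g^{-1}}$ has enough idempotents: there is a set $M$ of pairwise orthogonal commuting idempotents of it such that the set $\bigvee M$ of finite joins (equivalently finite sums) of elements of $M$ is a set of local units, i.e. for each $x$ there is $f\in\bigvee M$ with $fx=xf=x$. *)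

(* Defs.v *)
From HB Require Import structures.
From mathcomp Require Import all_boot all_algebra.
From mathcomp Require Import monoid.
From Stdlib Require List.
Set Implicit Arguments. Unset Strict Implicit. Unset Printing Implicit Defensive.
Import GRing.Theory.
Local Open Scope ring_scope.

Record graph := Graph {
  vert : Type;
  edge : Type;
  src : edge -> vert;
  rng : edge -> vert
}.

Inductive lsym (E : graph) :=
  | SV of vert E
  | SE of edge E
  | SG of edge E.     (* ghost edge f^* *)

(* Images of the generators inside an (ambient, unital) ring A. *)
Record lpa_gen (E : graph) (A : pzRingType) := LpaGen {
  gv : vert E -> A;
  ge : edge E -> A;
  gg : edge E -> A
}.

Definition ev_sym (E : graph) (A : pzRingType) (X : lpa_gen E A) (s : lsym E) : A :=
  match s with SV v => gv X v | SE f => ge X f | SG f => gg X f end.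

Definition ev_word (E : graph) (A : pzRingType) (X : lpa_gen E A) (w : seq (lsym E)) : A :=
  \prod_(s <- w) ev_sym X s.

(* The defining relations of L_R(E), together with "R commutes with the
   generators" (phi : R -> A gives the R-algebra structure). *)
Definition lpa_rels (E : graph) (R A : pzRingType) (phi : {rmorphism R -> A})
    (X : lpa_gen E A) : Prop :=
  (forall u v : vert E, u <> v -> gv X u * gv X v = 0) /\
  (forall v : vert E, gv X v * gv X v = gv X v) /\
  (forall f : edge E, gv X (src f) * ge X f = ge X f /\ ge X f * gv X (rng f) = ge X f) /\
  (forall f : edge E, gv X (rng f) * gg X f = gg X f /\ gg X f * gv X (src f) = gg X f) /\
  (forall f f' : edge E, f <> f' -> gg X f * ge X f' = 0) /\
  (forall f : edge E, gg X f * ge X f = gv X (rng f)) /\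
  (forall (v : vert E) (l : seq (edge E)),
     l <> [::] -> List.NoDup l -> (forall f, src f = v <-> List.In f l) ->
     \sum_(f <- l) ge X f * gg X f = gv X v) /\
  (forall (r : R) (s : lsym E), phi r * ev_sym X s = ev_sym X s * phi r).

Definition lincomb (E : graph) (R A : pzRingType) (phi : {rmorphism R -> A})
    (X : lpa_gen E A) (l : seq (R * seq (lsym E))) : A :=
  \sum_(p <- l) phi p.1 * ev_word X p.2.

(* (A, phi, X) realizes the Leavitt path algebra L_R(E): the relations hold,
   and every R-linear relation among (nonempty) monomials holding in A holds in
   every R-algebra generated by elements satisfying the defining relations,
   i.e. the R-span of the nonempty monomials in A is the universal algebra
   (the free R-algebra modulo the ideal of relations). L_R(E) itself is the
   subset [lpa_elt] of the unital ring A. *)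
Definition is_LPA (E : graph) (R A : pzRingType) (phi : {rmorphism R -> A})
    (X : lpa_gen E A) : Prop :=
  lpa_rels phi X /\
  forall (B : pzRingType) (psi : {rmorphism R -> B}) (Y : lpa_gen E B),
    lpa_rels psi Y ->
    forall l : seq (R * seq (lsym E)),
      (forall p, List.In p l -> 0 < size p.2)%N ->
      lincomb phi X l = 0 -> lincomb psi Y l = 0.

Definition lpa_elt (E : graph) (R A : pzRingType) (phi : {rmorphism R -> A})
    (X : lpa_gen E A) (x : A) : Prop :=
  exists l : seq (R * seq (lsym E)),
    (forall p, List.In p l -> 0 < size p.2)%N /\ x = lincomb phi X l.

Definition deg_sym (G : groupType) (E : graph) (degE : edge E -> G) (s : lsym E) : G :=
  match s with SV _ => one | SE f => degE f | SG f => inv (degE f) end.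

Definition deg_word (G : groupType) (E : graph) (degE : edge E -> G)
    (w : seq (lsym E)) : G :=
  foldr (fun s g => mul (deg_sym degE s) g) one w.

(* The homogeneous component of degree g of the quotient grading: the image of
   the degree-g component of the free algebra, i.e. the R-linear combinations
   of nonempty monomials of degree g. *)
Definition lpa_comp (G : groupType) (E : graph) (R A : pzRingType)
    (phi : {rmorphism R -> A}) (X : lpa_gen E A) (degE : edge E -> G)
    (g : G) (x : A) : Prop :=
  exists l : seq (R * seq (lsym E)),
    (forall p, List.In p l -> 0 < size p.2 /\ deg_word degE p.2 = g)%N /\
    x = lincomb phi X l.

Definition addspan (A : pzRingType) (S : A -> Prop) (x : A) : Prop :=
  exists l : seq A, (forall y, List.In y l -> S y) /\ x = \sum_(y <- l) y.

Definition setmul (A : pzRingType) (P Q : A -> Prop) : A -> Prop :=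
  addspan (fun z => exists a b, [/\ P a, Q b & z = a * b]).

(* A ring T (a subset of A closed under the ring operations) has enough
   idempotents: a set M of pairwise orthogonal commuting idempotents of T
   whose finite joins (= finite sums of distinct elements) form a set of
   local units of T. *)
Definition enough_idempotents (A : pzRingType) (T : A -> Prop) : Prop :=
  exists M : A -> Prop,
    [/\ (forall e, M e -> T e /\ e * e = e),
        (forall e f, M e -> M f -> e * f = f * e),
        (forall e f, M e -> M f -> e <> f -> e * f = 0)
      & (forall x, T x ->
           exists l : seq A,
             [/\ uniq l, (forall e, e \in l -> M e),
                 (\sum_(e <- l) e) * x = x & x * (\sum_(e <- l) e) = x])].

Definition virtually_epsilon_strong (G : groupType) (A : pzRingType)
    (S : G -> A -> Prop) : Prop :=
  forall g : G,
    (forall x, setmul (setmul (S g) (S (inv g))) (S g) x <-> S g x) /\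
    enough_idempotents (setmul (S g) (S (inv g))).

(* Main.v *)
Require Import Defs.
From HB Require Import structures.
From mathcomp Require Import all_boot all_algebra.
From mathcomp Require Import monoid.
From Stdlib Require Import Classical.
Set Implicit Arguments. Unset Strict Implicit. Unset Printing Implicit Defensive.
Import GRing.Theory.
Local Open Scope ring_scope.

Section Paths.
Variables (E : graph) (A : pzRingType) (X : lpa_gen E A).
Hypothesis H1 : forall u v : vert E, u <> v -> gv X u * gv X v = 0.
Hypothesis H2 : forall v : vert E, gv X v * gv X v = gv X v.
Hypothesis H3 : forall f : edge E, gv X (src f) * ge X f = ge X f /\ ge X f * gv X (rng f) = ge X f.
Hypothesis H4 : forall f : edge E, gv X (rng f) * gg X f = gg X f /\ gg X f * gv X (src f) = gg X f.
Hypothesis H5 : forall f f' : edge E, f <> f' -> gg X f * ge X f' = 0.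
Hypothesis H6 : forall f : edge E, gg X f * ge X f = gv X (rng f).

Fixpoint pathf (v : vert E) (m : seq (edge E)) : Prop :=
  match m with [::] => True | f :: m' => src f = v /\ pathf (rng f) m' end.
Fixpoint term (v : vert E) (m : seq (edge E)) : vert E :=
  match m with [::] => v | f :: m' => term (rng f) m' end.
Fixpoint Lg (m : seq (edge E)) : A :=
  match m with [::] => 1 | f :: m' => ge X f * Lg m' end.
Fixpoint Rg (m : seq (edge E)) : A :=
  match m with [::] => 1 | f :: m' => Rg m' * gg X f end.
Definition L v m := gv X v * Lg m.
Definition R v m := Rg m * gv X v.

Lemma Lg_cat m1 m2 : Lg (m1 ++ m2) = Lg m1 * Lg m2.
Proof. elim: m1 => [|f m1 IH] /=; first by rewrite mul1r. by rewrite IH mulrA. Qed.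
Lemma Rg_cat m1 m2 : Rg (m1 ++ m2) = Rg m2 * Rg m1.
Proof. elim: m1 => [|f m1 IH] /=; first by rewrite mulr1. by rewrite IH mulrA. Qed.
Lemma term_cat v m1 m2 : term v (m1 ++ m2) = term (term v m1) m2.
Proof. by elim: m1 v => [|f m1 IH] v //=. Qed.
Lemma pathf_cat v m1 m2 : pathf v (m1 ++ m2) <-> pathf v m1 /\ pathf (term v m1) m2.
Proof. elim: m1 v => [|f m1 IH] v /=; first by tauto. rewrite IH; tauto. Qed.

Lemma RL_term v m : pathf v m -> R v m * L v m = gv X (term v m).
Proof.
elim: m v => [|f m IH] v /=; first by rewrite /R /L /= mul1r mulr1 H2.
move=> [<- Hp]; rewrite -(IH _ Hp) /R /L /=.
rewrite -!mulrA (mulrA (gv X (src f)) (gv X (src f))) H2.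
rewrite (mulrA (gg X f) (gv X (src f))). rewrite (proj2 (H4 f)) (mulrA (gg X f) (ge X f)) H6.
by rewrite (mulrA (gv X (rng f)) (gv X (rng f))) H2.
Qed.

Lemma L_term v m : pathf v m -> L v m * gv X (term v m) = L v m.
Proof.
elim: m v => [|f m IH] v /=; first by rewrite /L /= mulr1 H2.
move=> [<- Hp]; move: (IH _ Hp); rewrite /L /= => IH'.
by rewrite -(proj2 (H3 f)) -!mulrA (mulrA (gv X (rng f))) IH'.
Qed.

Lemma R_term v m : pathf v m -> gv X (term v m) * R v m = R v m.
Proof.
elim: m v => [|f m IH] v /=; first by rewrite /R /= mul1r H2.
move=> [<- Hp]; move: (IH _ Hp); rewrite /R /= => IH'.
by rewrite -(proj1 (H4 f)) !mulrA -(mulrA _ _ (gv X (rng f))) IH'.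
Qed.


Lemma RL_orth v m v' m' : pathf v m -> pathf v' m' ->
  ~ (v = v' /\ exists t, m' = m ++ t) -> ~ (v' = v /\ exists t, m = m' ++ t) ->
  R v m * L v' m' = 0.
Proof.
elim: m v v' m' => [|f m IH] v v' m' /=.
  move=> _ _ N1 _; have Hvv : v <> v' by move=> E1; apply: N1; split => //; exists m'.
  by rewrite /R /L /= mul1r mulrA H1 // mul0r.
case: m' => [|f' m'] /=.
  move=> _ _ _ N2; have Hvv : v <> v' by move=> E1; apply: N2; split => //; exists (f :: m).
  by rewrite /R /L /= -!mulrA (mulrA (gv X v)) H1 // mul0r !mulr0.
move=> [Ev Hp] [Ev' Hp'] N1 N2.
case: (classic (v = v')) => [Evv|Hvv]; last first.
  by rewrite /R /L /= -!mulrA (mulrA (gv X v)) H1 // mul0r !mulr0.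
case: (classic (f = f')) => [Eff|Hff]; last first.
  rewrite /R /L /= -!mulrA (mulrA (gv X v)) -Evv H2 Evv -Ev' (mulrA (gv X (src f'))) (proj1 (H3 f')).
  by rewrite (mulrA (gg X f)) H5 // mul0r mulr0.
subst f' v' v.
have := IH (rng f) (rng f) m' Hp Hp'.
rewrite /R /L /= => <-.
- rewrite -!mulrA (mulrA (gv X (src f))) H2 (mulrA (gg X f) (gv X (src f))) (proj2 (H4 f)) (mulrA (gg X f) (ge X f)) H6.
  by rewrite (mulrA (gv X (rng f)) (gv X (rng f))) H2.
- move=> [_ [t Et]]; apply: N1; split => //; exists t; by rewrite Et.
- move=> [_ [t Et]]; apply: N2; split => //; exists t; by rewrite Et.
Qed.

End Paths.

Section NFsec.
Variables (G : groupType) (E : graph) (A : pzRingType) (X : lpa_gen E A) (degE : edge E -> G).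
Hypothesis H1 : forall u v : vert E, u <> v -> gv X u * gv X v = 0.
Hypothesis H2 : forall v : vert E, gv X v * gv X v = gv X v.
Hypothesis H3 : forall f : edge E, gv X (src f) * ge X f = ge X f /\ ge X f * gv X (rng f) = ge X f.
Hypothesis H4 : forall f : edge E, gv X (rng f) * gg X f = gg X f /\ gg X f * gv X (src f) = gg X f.
Hypothesis H5 : forall f f' : edge E, f <> f' -> gg X f * ge X f' = 0.
Hypothesis H6 : forall f : edge E, gg X f * ge X f = gv X (rng f).

Definition degp (m : seq (edge E)) : G := foldr (fun f d => mul (degE f) d) one m.
Lemma degp_cat m1 m2 : degp (m1 ++ m2) = mul (degp m1) (degp m2).
Proof. elim: m1 => [|f m1 IH] /=; first by rewrite mul1g. by rewrite IH mulgA. Qed.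

Definition NF (y : A) (d : G) : Prop := y = 0 \/
  exists v m u n, [/\ pathf v m, pathf u n, term v m = term u n,
     y = L X v m * R X u n & d = mul (degp m) (inv (degp n))].

Lemma NF_base s : NF (ev_sym X s) (deg_sym degE s).
Proof.
right; case: s => [v|f|f] /=.
- exists v, [::], v, [::]; split => //=; first by rewrite /L /R /= mulr1 mul1r H2.
  by rewrite invg1 mulg1.
- exists (src f), [:: f], (rng f), [::]; split => //=.
    by rewrite /L /R /= !mulr1 mul1r (proj1 (H3 f)) (proj2 (H3 f)).
  by rewrite invg1 !mulg1.
- exists (rng f), [::], (src f), [:: f]; split => //=.
    by rewrite /L /R /= !mulr1 mul1r (proj2 (H4 f)) (proj1 (H4 f)).
  by rewrite mulg1 mul1g.
Qed.

Lemma NF_step s y d : NF y d -> NF (ev_sym X s * y) (mul (deg_sym degE s) d).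
Proof.
case=> [->|[v [m [u [n [Hm Hn Ht -> ->]]]]]]; first by left; rewrite mulr0.
case: s => [w|f|f] /=.
- case: (classic (w = v)) => [Ewv|Hwv].
    subst w; right; exists v, m, u, n; split => //; last by rewrite mul1g.
    by rewrite /L !mulrA H2.
  by left; rewrite /L !mulrA H1 // !mul0r.
- case: (classic (rng f = v)) => [Efv|Hfv]; last first.
    left; rewrite /L -(proj2 (H3 f)) !mulrA -(mulrA (ge X f)) H1 // mulr0 !mul0r //.
  right; exists (src f), (f :: m), u, n; split => //=.
  + by split => //; rewrite Efv.
  + by rewrite Efv.
  + by rewrite /L /= !mulrA (proj1 (H3 f)) -Efv (proj2 (H3 f)).
  + by rewrite mulgA.
- case: m Hm Ht => [|g m] /=.
  + move=> _ Ht; case: (classic (src f = v)) => [Efv|Hfv]; last first.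
      left; rewrite /L -(proj2 (H4 f)) !mulrA -(mulrA (gg X f)) H1 // mulr0 !mul0r //.
    right; exists (rng f), [::], u, (n ++ [:: f]); split => //=.
    * by apply/pathf_cat; split => //=; rewrite Efv Ht.
    * by rewrite term_cat -Ht.
    * rewrite /L /R /= Rg_cat /= !mulr1 !mul1r Ht -mulrA.
      have := R_term H2 H4 Hn; rewrite /R => ->.
      by rewrite !mulrA (proj1 (H4 f)).
    * by rewrite degp_cat /= mulg1 invgM !mul1g.
  + move=> [Eg Hm] Ht; case: (classic (f = g)) => [Efg|Hfg]; last first.
      left; rewrite /L /= -Eg (mulrA (gv X (src g))) (proj1 (H3 g)).
      by rewrite !mulrA H5 // !mul0r.
    subst g; right; exists (rng f), m, u, n; split => //.
      by rewrite /L /= -Eg (mulrA (gv X (src f))) (proj1 (H3 f)) !mulrA H6.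
    by rewrite !mulgA mulVg mul1g.
Qed.

Lemma NF_word w : (0 < size w)%N -> NF (ev_word X w) (deg_word degE w).
Proof.
elim: w => [|s w IH] //= _.
rewrite /ev_word big_cons -/(ev_word X w).
case: w IH => [|s' w] IH.
  by rewrite /ev_word big_nil mulr1 /= mulg1; apply: NF_base.
exact: NF_step (IH isT).
Qed.

End NFsec.

Section Words.
Variables (G : groupType) (E : graph) (A : pzRingType) (X : lpa_gen E A) (degE : edge E -> G).

Fixpoint RGW (m : seq (edge E)) : seq (lsym E) :=
  match m with [::] => [::] | f :: m' => RGW m' ++ [:: SG f] end.
Definition LW v (m : seq (edge E)) : seq (lsym E) := SV v :: map (@SE E) m.
Definition RW v (m : seq (edge E)) : seq (lsym E) := RGW m ++ [:: SV v].

Lemma ev_word_cat w1 w2 : ev_word X (w1 ++ w2) = ev_word X w1 * ev_word X w2.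
Proof. by rewrite /ev_word big_cat. Qed.
Lemma ev_word_cons s w : ev_word X (s :: w) = ev_sym X s * ev_word X w.
Proof. by rewrite /ev_word big_cons. Qed.
Lemma ev_word1 s : ev_word X [:: s] = ev_sym X s.
Proof. by rewrite /ev_word big_seq1. Qed.

Lemma ev_LW v m : ev_word X (LW v m) = L X v m.
Proof.
rewrite /LW ev_word_cons /L /=; congr (_ * _).
by elim: m => [|f m IH] /=; rewrite ?ev_word_cons ?IH // /ev_word big_nil.
Qed.
Lemma ev_RW v m : ev_word X (RW v m) = R X v m.
Proof.
rewrite /RW ev_word_cat ev_word1 /R /=; congr (_ * _).
elim: m => [|f m IH] /=; first by rewrite /ev_word big_nil.
by rewrite ev_word_cat IH ev_word1.
Qed.

Lemma deg_word_cat w1 w2 : deg_word degE (w1 ++ w2) = mul (deg_word degE w1) (deg_word degE w2).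
Proof. elim: w1 => [|s w1 IH] /=; first by rewrite mul1g. by rewrite IH mulgA. Qed.
Lemma deg_LW v m : deg_word degE (LW v m) = degp degE m.
Proof. rewrite /= mul1g; by elim: m => [|f m IH] //=; rewrite IH. Qed.
Lemma deg_RW v m : deg_word degE (RW v m) = inv (degp degE m).
Proof.
rewrite /RW deg_word_cat /= !mulg1.
elim: m => [|f m IH] /=; first by rewrite invg1.
by rewrite deg_word_cat IH /= mulg1 invgM.
Qed.

End Words.

Section Generic.
Variable (A : pzRingType).

Lemma addspan_ind (P S : A -> Prop) : S 0 -> (forall x y, S x -> S y -> S (x + y)) ->
  (forall y, P y -> S y) -> forall x, addspan P x -> S x.
Proof.
move=> S0 SD SP x [l [Hl ->]]; elim: l Hl => [|y l IH] Hl; first by rewrite big_nil.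
rewrite big_cons; apply: SD; first by apply: SP; apply: Hl; left.
by apply: IH => z Hz; apply: Hl; right.
Qed.
Lemma addspan0 (P : A -> Prop) : addspan P 0.
Proof. by exists [::]; split => //; rewrite big_nil. Qed.
Lemma addspanD (P : A -> Prop) x y : addspan P x -> addspan P y -> addspan P (x + y).
Proof.
move=> [l1 [H1 ->]] [l2 [H2 ->]]; exists (l1 ++ l2); split; last by rewrite big_cat.
by move=> z Hz; case: (List.in_app_or _ _ _ Hz) => ?; [apply: H1 | apply: H2].
Qed.
Lemma addspan1 (P : A -> Prop) x : P x -> addspan P x.
Proof. by move=> Px; exists [:: x]; split; [move=> z [<-|[]] | rewrite big_seq1]. Qed.
Lemma setmul1 (P Q : A -> Prop) a b : P a -> Q b -> setmul P Q (a * b).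
Proof. by move=> Pa Qb; apply: addspan1; exists a, b. Qed.
End Generic.

Section Main.
Variables (G : groupType) (Rr : pzRingType) (E : graph) (A : pzRingType)
  (phi : {rmorphism Rr -> A}) (X : lpa_gen E A) (degE : edge E -> G).
Hypothesis H8 : forall (r : Rr) (s : lsym E), phi r * ev_sym X s = ev_sym X s * phi r.

Lemma comm_word r w : phi r * ev_word X w = ev_word X w * phi r.
Proof.
elim: w => [|s w IH]; first by rewrite /ev_word big_nil mulr1 mul1r.
by rewrite ev_word_cons mulrA H8 -mulrA IH mulrA.
Qed.

Local Notation S := (lpa_comp phi X degE).

Lemma S0 g : S g 0.
Proof. by exists [::]; split => //; rewrite /lincomb big_nil. Qed.
Lemma SD g x y : S g x -> S g y -> S g (x + y).
Proof.
move=> [l1 [H1 ->]] [l2 [H2 ->]]; exists (l1 ++ l2); split; last by rewrite /lincomb big_cat.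
by move=> z Hz; case: (List.in_app_or _ _ _ Hz) => ?; [apply: H1 | apply: H2].
Qed.
Lemma Smon r w : (0 < size w)%N -> S (deg_word degE w) (phi r * ev_word X w).
Proof. by move=> Hw; exists [:: (r, w)]; split; [move=> z [<-|[]] | rewrite /lincomb big_seq1]. Qed.
Lemma Sword w : (0 < size w)%N -> S (deg_word degE w) (ev_word X w).
Proof. by move=> Hw; have := Smon 1 Hw; rewrite rmorph1 mul1r. Qed.
Lemma Seq g h x : g = h -> S g x -> S h x.
Proof. by move=> ->. Qed.

Lemma lincomb_cons p l : lincomb phi X (p :: l) = phi p.1 * ev_word X p.2 + lincomb phi X l.
Proof. by rewrite /lincomb big_cons. Qed.

Lemma monmul r w r' w' : phi r * ev_word X w * (phi r' * ev_word X w') = phi (r * r') * ev_word X (w ++ w').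
Proof. by rewrite ev_word_cat rmorphM -mulrA (mulrA (ev_word X w)) -comm_word !mulrA. Qed.

Lemma Smul h k a b : S h a -> S k b -> S (mul h k) (a * b).
Proof.
move=> [la [Ha ->]] [lb [Hb ->]].
elim: la Ha => [|p la IH] Ha; first by rewrite /lincomb big_nil mul0r; apply: S0.
rewrite lincomb_cons mulrDl; apply: SD; last by apply: IH => q Hq; apply: Ha; right.
have [Hp1 Hp2] := Ha p (or_introl erefl).
clear IH; elim: lb Hb => [|q lb IH2] Hb; first by rewrite /lincomb big_nil mulr0; apply: S0.
rewrite lincomb_cons mulrDr; apply: SD; last by apply: IH2 => q' Hq; apply: Hb; right.
have [Hq1 Hq2] := Hb q (or_introl erefl).
rewrite monmul; apply: Seq (Smon _ _); first by rewrite deg_word_cat Hp2 Hq2.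
by rewrite size_cat addn_gt0 Hp1.
Qed.


Hypothesis H1 : forall u v : vert E, u <> v -> gv X u * gv X v = 0.
Hypothesis H2 : forall v : vert E, gv X v * gv X v = gv X v.
Hypothesis H3 : forall f : edge E, gv X (src f) * ge X f = ge X f /\ ge X f * gv X (rng f) = ge X f.
Hypothesis H4 : forall f : edge E, gv X (rng f) * gg X f = gg X f /\ gg X f * gv X (src f) = gg X f.
Hypothesis H5 : forall f f' : edge E, f <> f' -> gg X f * ge X f' = 0.
Hypothesis H6 : forall f : edge E, gg X f * ge X f = gv X (rng f).

Definition Zw (u : vert E) n (v : vert E) m := LW u n ++ RW v m.
Lemma ev_Zw u n v m : ev_word X (Zw u n v m) = L X u n * R X v m.
Proof. by rewrite /Zw ev_word_cat ev_LW ev_RW. Qed.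
Lemma deg_Zw u n v m : deg_word degE (Zw u n v m) = mul (degp degE n) (inv (degp degE m)).
Proof. by rewrite /Zw deg_word_cat deg_LW deg_RW. Qed.
Lemma size_Zw u n v m : (0 < size (Zw u n v m))%N.
Proof. by []. Qed.

Lemma deg_eq (a b : G) : one = mul a (inv b) -> a = b.
Proof. by move=> H; rewrite -[a]mulg1 -(mulVg b) mulgA -H mul1g. Qed.

Lemma ring4 (a b c d : A) : a * b * (c * d) * (a * b) = a * (b * c) * (d * a) * b.
Proof. by rewrite !mulrA. Qed.

Lemma part1 g x : setmul (setmul (S g) (S (inv g))) (S g) x <-> S g x.
Proof.
split.
  apply: addspan_ind; [exact: S0 | exact: SD | ].
  move=> y [a [b [Ha Hb ->]]].
  have Ha' : S (mul g (inv g)) a.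
    move: Ha; apply: addspan_ind; [exact: S0 | exact: SD | ].
    by move=> z [a' [b' [Ha' Hb' ->]]]; apply: Smul.
  by apply: Seq (Smul Ha' Hb); rewrite mulgV mul1g.
move=> [l [Hl ->]]; elim: l Hl => [|p l IH] Hl.
  by rewrite /lincomb big_nil; apply: addspan0.
rewrite lincomb_cons; apply: addspanD; last by apply: IH => q Hq; apply: Hl; right.
have [Hp1 Hp2] := Hl p (or_introl erefl).
case: (NF_word degE H1 H2 H3 H4 H5 H6 Hp1) => [->|[v [m [u [n [Hm Hn Ht Ey Ed]]]]]].
  by rewrite mulr0; apply: addspan0.
have Hy : ev_word X p.2 = ev_word X p.2 * ev_word X (Zw u n v m) * ev_word X p.2.
  rewrite ev_Zw Ey ring4 (RL_term H2 H4 H6 Hn) (RL_term H2 H4 H6 Hm) -Ht -(mulrA (L X v m)) H2.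
  by rewrite (L_term H2 H3 Hm).
rewrite Hy !mulrA; apply: addspan1; exists (phi p.1 * ev_word X p.2 * ev_word X (Zw u n v m)), (ev_word X p.2).
split => //; last by apply: Seq (Sword Hp1).
apply: setmul1; first by apply: Seq (Smon _ Hp1).
apply: Seq (Sword (size_Zw u n v m)).
by rewrite deg_Zw -Hp2 Ed invgM invgK.
Qed.

Definition T g := setmul (S g) (S (inv g)).
Definition Q (v : vert E) m := L X v m * R X v m.
Definition MM g (e : A) := exists v m, [/\ pathf v m, e = Q v m, T g (Q v m) &
   forall m1 t, m = m1 ++ t -> t <> [::] -> ~ T g (Q v m1)].

Lemma L_cat (v : vert E) m t : L X v (m ++ t) = L X v m * Lg X t.
Proof. by rewrite /L Lg_cat mulrA. Qed.
Lemma R_cat (u : vert E) n t : R X u (n ++ t) = Rg X t * R X u n.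
Proof. by rewrite /R Rg_cat mulrA. Qed.

Lemma ring5 (a b c d : A) : a * b * (a * c * d) = a * (b * a) * c * d.
Proof. by rewrite !mulrA. Qed.
Lemma ring6 (a b c d e : A) : a * (b * c) * (d * e) = a * b * ((c * d) * e).
Proof. by rewrite !mulrA. Qed.

Lemma ring3 (a b c d : A) : a * b * (c * d) = a * (b * c) * d.
Proof. by rewrite !mulrA. Qed.

Lemma Q_idem v m : pathf v m -> Q v m * Q v m = Q v m.
Proof. by move=> Hm; rewrite /Q ring3 (RL_term H2 H4 H6 Hm) (L_term H2 H3 Hm). Qed.

Lemma MM_idem g e : MM g e -> e * e = e.
Proof. by move=> [v [m [Hm -> _ _]]]; apply: Q_idem. Qed.
Lemma MM_T g e : MM g e -> T g e.
Proof. by move=> [v [m [Hm -> HT _]]]. Qed.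
Lemma MM_comm g r e : MM g e -> phi r * e = e * phi r.
Proof. by move=> [v [m [Hm -> _ _]]]; rewrite /Q -ev_Zw comm_word. Qed.
Lemma MM_orth g e f : MM g e -> MM g f -> e <> f -> e * f = 0.
Proof.
move=> [v [m [Hm -> HT Hmin]]] [v' [m' [Hm' -> HT' Hmin']]] Hne.
rewrite /Q ring3 (RL_orth H1 H2 H3 H4 H5 H6 Hm Hm') ?mulr0 ?mul0r //.
  move=> [Evv [t Et]]; subst v'; case: (classic (t = [::])) => [Et0|Etn].
    by apply: Hne; rewrite Et Et0 cats0.
  exact: (Hmin' m t Et Etn HT).
move=> [Evv [t Et]]; subst v'; case: (classic (t = [::])) => [Et0|Etn].
  by apply: Hne; rewrite Et Et0 cats0.
exact: (Hmin m' t Et Etn HT').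
Qed.

Lemma T_mulr g y c : S one c -> T g y -> T g (y * c).
Proof.
move=> Sc Ty; apply: (@addspan_ind _ _ (fun y => T g (y * c)) _ _ _ y Ty).
- by rewrite mul0r; apply: addspan0.
- by move=> a b Ha Hb; rewrite mulrDl; apply: addspanD.
move=> z [a [b [Ha Hb ->]]]; rewrite -mulrA; apply: setmul1 => //.
by apply: Seq (Smul Hb Sc); rewrite mulg1.
Qed.
Lemma T_mull g y c : S one c -> T g y -> T g (c * y).
Proof.
move=> Sc Ty; apply: (@addspan_ind _ _ (fun y => T g (c * y)) _ _ _ y Ty).
- by rewrite mulr0; apply: addspan0.
- by move=> a b Ha Hb; rewrite mulrDr; apply: addspanD.
move=> z [a [b [Ha Hb ->]]]; rewrite mulrA; apply: setmul1 => //.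
by apply: Seq (Smul Sc Ha); rewrite mul1g.
Qed.

Lemma minpre g n : forall v m, (size m < n)%N -> pathf v m -> T g (Q v m) ->
  exists m0 t, m = m0 ++ t /\ MM g (Q v m0).
Proof.
elim: n => [|n IH] v m //= Hs Hm HT.
case: (classic (exists m1 t, [/\ m = m1 ++ t, t <> [::] & T g (Q v m1)])).
  move=> [m1 [t [Et Etn HT1]]].
  have Hs1 : (size m1 < n)%N.
    move: Hs; rewrite Et size_cat; case: t Etn {Et} => [|x t] // _ /=.
    by rewrite addnS ltnS; apply: leq_ltn_trans; apply: leq_addr.
  have Hm1 : pathf v m1 by move: Hm; rewrite Et => /pathf_cat [].
  have [m0 [t0 [E0 HM]]] := IH v m1 Hs1 Hm1 HT1.
  by exists m0, (t0 ++ t); split => //; rewrite Et E0 catA.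
move=> Hno; exists m, [::]; split; first by rewrite cats0.
exists v, m; split => // m1 t Et Etn HT1; apply: Hno; by exists m1, t.
Qed.

Lemma sum_unit g (F : seq A) e0 : uniq F -> (forall e, e \in F -> MM g e) -> e0 \in F ->
  (\sum_(e <- F) e) * e0 = e0 /\ e0 * (\sum_(e <- F) e) = e0.
Proof.
move=> HU HM He0; have M0 := HM e0 He0.
split.
  rewrite mulr_suml (bigD1_seq e0) //= (MM_idem M0) big1_seq ?addr0 //.
  move=> i /andP [Hi HiF]; apply: MM_orth (HM i HiF) M0 _.
  by move=> Ei; move/eqP: Hi.
rewrite mulr_sumr (bigD1_seq e0) //= (MM_idem M0) big1_seq ?addr0 //.
move=> i /andP [Hi HiF]; apply: MM_orth M0 (HM i HiF) _.
by move=> Ei; move/eqP: Hi; rewrite Ei.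
Qed.

Lemma sum_comm g (F : seq A) r : (forall e, e \in F -> MM g e) ->
  phi r * (\sum_(e <- F) e) = (\sum_(e <- F) e) * phi r.
Proof.
move=> HM; rewrite mulr_sumr mulr_suml; apply: eq_big_seq => e He.
exact: MM_comm (HM e He).
Qed.

Definition W g (x : A) := exists l0 : seq A, (forall e, e \in l0 -> MM g e) /\
  forall F : seq A, uniq F -> (forall e, e \in F -> MM g e) -> {subset l0 <= F} ->
    (\sum_(e <- F) e) * x = x /\ x * (\sum_(e <- F) e) = x.

Lemma W0 g : W g 0.
Proof. by exists [::]; split => // F _ _ _; rewrite mulr0 mul0r. Qed.
Lemma WD g x y : W g x -> W g y -> W g (x + y).
Proof.
move=> [l1 [M1 H1']] [l2 [M2 H2']]; exists (l1 ++ l2); split.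
  by move=> e; rewrite mem_cat => /orP [] ?; [apply: M1 | apply: M2].
move=> F HU HM Hsub.
have [a1 b1] : (\sum_(e <- F) e) * x = x /\ x * (\sum_(e <- F) e) = x.
  by apply: H1' => // e He; apply: Hsub; rewrite mem_cat He.
have [a2 b2] : (\sum_(e <- F) e) * y = y /\ y * (\sum_(e <- F) e) = y.
  by apply: H2' => // e He; apply: Hsub; rewrite mem_cat He orbT.
by rewrite mulrDl mulrDr a1 a2 b1 b2.
Qed.

Lemma Wmon g r w : (0 < size w)%N -> deg_word degE w = one -> T g (ev_word X w) ->
  W g (phi r * ev_word X w).
Proof.
move=> Hw Hd HT.
case: (NF_word degE H1 H2 H3 H4 H5 H6 Hw) => [->|[v [m [u [n [Hm Hn Ht Ey Ed]]]]]].
  by rewrite mulr0; apply: W0.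
have Hdeg : degp degE m = degp degE n by apply: deg_eq; rewrite -Ed.
have SZ : S one (ev_word X (Zw u n v m)).
  by apply: Seq (Sword (size_Zw u n v m)); rewrite deg_Zw Hdeg mulgV.
have HQv : T g (Q v m).
  have -> : Q v m = ev_word X w * ev_word X (Zw u n v m).
    by rewrite ev_Zw Ey ring3 (RL_term H2 H4 H6 Hn) -Ht (L_term H2 H3 Hm).
  exact: T_mulr.
have HQu : T g (Q u n).
  have -> : Q u n = ev_word X (Zw u n v m) * ev_word X w.
    by rewrite ev_Zw Ey ring3 (RL_term H2 H4 H6 Hm) Ht (L_term H2 H3 Hn).
  exact: T_mull.
have [m0 [t1 [Em HM1]]] := minpre (ltnSn (size m)) Hm HQv.
have [n0 [t2 [En HM2]]] := minpre (ltnSn (size n)) Hn HQu.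
have Hm0 : pathf v m0 by move: Hm; rewrite Em => /pathf_cat [].
have Hn0 : pathf u n0 by move: Hn; rewrite En => /pathf_cat [].
have HL : Q v m0 * ev_word X w = ev_word X w.
  rewrite Ey Em L_cat /Q ring5 (RL_term H2 H4 H6 Hm0).
  by rewrite (L_term H2 H3 Hm0).
have HR : ev_word X w * Q u n0 = ev_word X w.
  rewrite Ey En R_cat /Q ring6 (RL_term H2 H4 H6 Hn0).
  by rewrite (R_term H2 H4 Hn0) [RHS]mulrA.
exists [:: Q v m0; Q u n0]; split.
  by move=> e; rewrite !inE => /orP [] /eqP ->.
move=> F HU HM Hsub.
have [HF1 _] := sum_unit HU HM (Hsub _ (mem_head _ _)).
have Hin : Q u n0 \in [:: Q v m0; Q u n0] by rewrite !inE eqxx orbT.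
have [_ HF2] := sum_unit HU HM (Hsub _ Hin).
split.
  rewrite mulrA -(sum_comm r HM) -mulrA; congr (_ * _).
  by rewrite -{1}HL mulrA HF1 HL.
rewrite -mulrA; congr (_ * _).
by rewrite -{1}HR -mulrA HF2 HR.
Qed.

Lemma TW g x : T g x -> W g x.
Proof.
apply: addspan_ind; [exact: W0 | exact: WD |].
move=> z [a [b [[la [Ha ->]] [lb [Hb ->]] ->]]].
elim: la Ha => [|p la IH] Ha; first by rewrite /lincomb big_nil mul0r; apply: W0.
rewrite lincomb_cons mulrDl; apply: WD; last by apply: IH => q Hq; apply: Ha; right.
have [Hp1 Hp2] := Ha p (or_introl erefl).
clear IH; elim: lb Hb => [|q lb IH2] Hb; first by rewrite /lincomb big_nil mulr0; apply: W0.
rewrite lincomb_cons mulrDr; apply: WD; last by apply: IH2 => q' Hq; apply: Hb; right.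
have [Hq1 Hq2] := Hb q (or_introl erefl).
rewrite monmul; apply: Wmon.
- by rewrite size_cat addn_gt0 Hp1.
- by rewrite deg_word_cat Hp2 Hq2 mulgV.
rewrite ev_word_cat; apply: setmul1.
  by apply: Seq (Sword Hp1).
by apply: Seq (Sword Hq1).
Qed.

Lemma part2 g : enough_idempotents (T g).
Proof.
exists (MM g); split.
- by move=> e He; split; [apply: MM_T He | apply: MM_idem He].
- move=> e f He Hf; case: (classic (e = f)) => [->//|Hne].
  by rewrite (MM_orth He Hf Hne) (MM_orth Hf He) //; move=> E'; apply: Hne.
- exact: MM_orth.
move=> x Tx; have [l0 [Hl0 HF]] := TW Tx.
have Hu := undup_uniq l0.
have HM' : forall e, e \in undup l0 -> MM g e by move=> e; rewrite mem_undup; apply: Hl0.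
have Hs : {subset l0 <= undup l0} by move=> e; rewrite mem_undup.
have [a b] := HF _ Hu HM' Hs.
by exists (undup l0); split.
Qed.

End Main.

Theorem proposition4p3 (G : groupType) (R : pzRingType) (E : graph)
    (A : pzRingType) (phi : {rmorphism R -> A}) (X : lpa_gen E A)
    (degE : edge E -> G) :
  is_LPA phi X ->
  virtually_epsilon_strong (lpa_comp phi X degE).
Proof.
move=> [[H1 [H2 [H3 [H4 [H5 [H6 [_ H8]]]]]]] _] g; split.
- move=> x; exact: (part1 degE H8 H1 H2 H3 H4 H5 H6).
- exact: (part2 degE H8 H1 H2 H3 H4 H5 H6).
Qed.
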